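(* Let $L$ be a convexity lattice. If $L$ is algebraic, or if $L$ is order-scattered, then $L$ is spatial.
   Context: A convexity lattice is a lattice isomorphic to $Cl(X,\varphi)$, the lattice of closed sets (ordered by inclusion) of a convex geometry $(X,\varphi)$, i.e. a closure operator $\varphi$ on a non-empty set $X$ with $\varphi(\emptyset)=\emptyset$ satisfying: for closed $A$ and $x\neq y$, $x\in\varphi(A\cup\{y\})$ and $x\notin A$ imply $y\notin\varphi(A\cup\{x\})$. A poset is order-scattered if it contains no copy of $\mathbb{Q}$. A complete lattice is spatial if every element is a join of completely join-irreducible elements (elements $y$ with a lower cover $y_*$ such that $z<y$ implies $z\leq y_*$). *)

(* Defs.v *)
From mathcomp Require Import all_boot all_order all_algebra.
From Stdlib Require Import List.

Set Implicit Arguments.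
Unset Strict Implicit.
Unset Printing Implicit Defensive.

Section ConvexGeometry.
Variable X : Type.

Definition sset (A B : X -> Prop) : Prop := forall x, A x -> B x.
Definition seq_set (A B : X -> Prop) : Prop := forall x, A x <-> B x.

Definition closure_operator (phi : (X -> Prop) -> (X -> Prop)) : Prop :=
  [/\ (forall A, sset A (phi A)),
      (forall A B, sset A B -> sset (phi A) (phi B)) &
      (forall A, seq_set (phi (phi A)) (phi A))].

Definition is_closed (phi : (X -> Prop) -> (X -> Prop)) (A : X -> Prop) : Prop :=
  seq_set (phi A) A.

Definition convex_geometry (phi : (X -> Prop) -> (X -> Prop)) : Prop :=
  [/\ inhabited X,
      closure_operator phi,
      (forall x, ~ phi (fun _ => False) x) &
      (forall (A : X -> Prop) (x y : X), is_closed phi A -> x <> y ->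
         phi (fun z => A z \/ z = y) x -> ~ A x ->
         ~ phi (fun z => A z \/ z = x) y)].
End ConvexGeometry.

Section OrderNotions.
Variables (T : Type) (le : T -> T -> Prop).

Definition lt (a b : T) : Prop := le a b /\ a <> b.

Definition is_lub (S : T -> Prop) (s : T) : Prop :=
  (forall x, S x -> le x s) /\ (forall u, (forall x, S x -> le x u) -> le s u).

Definition finite_set (F : T -> Prop) : Prop :=
  exists l : list T, forall x, F x <-> In x l.

Definition compact (a : T) : Prop :=
  forall (S : T -> Prop) (s : T), is_lub S s -> le a s ->
    exists (F : T -> Prop) (t : T),
      finite_set F /\ (forall x, F x -> S x) /\ is_lub F t /\ le a t.

Definition complete_lattice : Prop :=
  forall S : T -> Prop, exists s, is_lub S s.

Definition algebraic : Prop :=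
  complete_lattice /\
  forall x, exists S : T -> Prop, (forall c, S c -> compact c) /\ is_lub S x.

Definition order_scattered : Prop :=
  ~ exists g : rat -> T, forall p q : rat, (p <= q)%R <-> le (g p) (g q).

Definition completely_join_irreducible (y : T) : Prop :=
  exists ys : T,
    lt ys y /\ (forall z, le ys z -> le z y -> z = ys \/ z = y) /\
    (forall z, lt z y -> le z ys).

Definition spatial : Prop :=
  complete_lattice /\
  forall x, exists S : T -> Prop,
    (forall c, S c -> completely_join_irreducible c) /\ is_lub S x.

Definition convexity_lattice : Prop :=
  exists (X : Type) (phi : (X -> Prop) -> (X -> Prop)) (f : T -> (X -> Prop)),
    [/\ convex_geometry phi,
        (forall a, is_closed phi (f a)),
        (forall C, is_closed phi C -> exists a, seq_set (f a) C),
        (forall a b, seq_set (f a) (f b) -> a = b) &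
        (forall a b, le a b <-> sset (f a) (f b))].
End OrderNotions.

(* Main.v *)
Require Import Defs.
From mathcomp Require Import all_boot all_order all_algebra.
From Stdlib Require Import ClassicalEpsilon Classical.
From mathcomp Require Import zify.
Import Order.TTheory GRing.Theory Num.Theory.

Definition midp {T : Type} (le : T -> T -> Prop) (a b : T) : T :=
  epsilon (inhabits a) (fun m => Defs.lt le a m /\ Defs.lt le m b).

Fixpoint Hd {T : Type} (le : T -> T -> Prop) (bb ee : T) (n k : nat) : T :=
  match n with
  | 0 => if k == 0 then bb else ee
  | n'.+1 => if odd k then midp le (Hd le bb ee n' k./2) (Hd le bb ee n' k./2.+1)
             else Hd le bb ee n' k./2
  end.

Set Implicit Arguments.
Unset Strict Implicit.

Lemma Hd_even T le (bb ee : T) n j : Hd le bb ee n.+1 j.*2 = Hd le bb ee n j.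
Proof. by rewrite /= odd_double doubleK. Qed.

Lemma Hd_odd T le (bb ee : T) n j : Hd le bb ee n.+1 j.*2.+1 =
  midp le (Hd le bb ee n j) (Hd le bb ee n j.+1).
Proof. by rewrite /= odd_double /= uphalf_double. Qed.

Lemma Hd_lift T le (bb ee : T) n m k : Hd le bb ee (n + m) (k * 2 ^ m) = Hd le bb ee n k.
Proof.
elim: m => [|m IH]; first by rewrite addn0 expn0 muln1.
by rewrite addnS expnS mulnCA mul2n Hd_even.
Qed.

Section Ord.
End Ord.

Lemma Hd_inv T (le : T -> T -> Prop)
  (refl : forall a, le a a) (trans : forall a b c, le a b -> le b c -> le a c)
  (bb ee : T) (hbe : Defs.lt le bb ee)
  (D : forall p q, le bb p -> le q ee -> Defs.lt le p q ->
        exists m, Defs.lt le p m /\ Defs.lt le m q) :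
  forall n k, (k < 2 ^ n)%N ->
    [/\ le bb (Hd le bb ee n k), le (Hd le bb ee n k.+1) ee &
        Defs.lt le (Hd le bb ee n k) (Hd le bb ee n k.+1)].
Proof.
elim=> [|n IH] k.
  rewrite expn0 ltnS leqn0 => /eqP ->; split => //=; exact: refl.
move=> hk; rewrite -[k](odd_double_half) in hk *.
move: (odd k) (k./2) hk => b j hk.
have hj : (j < 2 ^ n)%N.
  move: hk; rewrite expnS mul2n -!muln2; case: b => /=; lia.
have [h1 h2 h3] := IH _ hj.
have hm := D _ _ h1 h2 h3.
have := epsilon_spec (inhabits (Hd le bb ee n j))
  (fun m => Defs.lt le (Hd le bb ee n j) m /\ Defs.lt le m (Hd le bb ee n j.+1)) hm.
rewrite -/(midp le _ _) => -[[m1 m0] [m2 m3]].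
case: b hk => hk.
- have -> : (true + j.*2 = j.*2.+1)%N by rewrite add1n.
  rewrite Hd_odd -doubleS Hd_even.
  split.
  + exact: trans h1 m1.
  + exact: h2.
  + exact: (conj m2 m3).
- have -> : (false + j.*2 = j.*2)%N by rewrite add0n.
  rewrite Hd_even Hd_odd.
  split.
  + exact: h1.
  + exact: trans m2 h2.
  + exact: (conj m1 m0).
Qed.

Lemma lt_le_trans' T (le : T -> T -> Prop)
  (trans : forall a b c, le a b -> le b c -> le a c)
  (anti : forall a b, le a b -> le b a -> a = b) a b c :
  Defs.lt le a b -> le b c -> Defs.lt le a c.
Proof.
move=> [hab nab] hbc; split; first exact: trans hab hbc.
move=> eac; subst c; exact: nab (anti _ _ hab hbc).
Qed.

Lemma Hd_mono T (le : T -> T -> Prop)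
  (refl : forall a, le a a) (trans : forall a b c, le a b -> le b c -> le a c)
  (anti : forall a b, le a b -> le b a -> a = b)
  (bb ee : T) (hbe : Defs.lt le bb ee)
  (D : forall p q, le bb p -> le q ee -> Defs.lt le p q ->
        exists m, Defs.lt le p m /\ Defs.lt le m q) N k l :
  (l <= 2 ^ N)%N ->
  ((k <= l)%N -> le (Hd le bb ee N k) (Hd le bb ee N l)) /\
  ((k < l)%N -> Defs.lt le (Hd le bb ee N k) (Hd le bb ee N l)).
Proof.
elim: l => [|l IH] hl.
  split; last by [].
  by rewrite leqn0 => /eqP ->; apply: refl.
have [_ _ h3] := Hd_inv refl trans hbe D hl.
have [IH1 IH2] := IH (ltnW hl).
have hlt : (k < l.+1)%N -> Defs.lt le (Hd le bb ee N k) (Hd le bb ee N l.+1).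
  rewrite ltnS leq_eqVlt => /orP[/eqP ->|hkl]; first exact: h3.
  apply: lt_le_trans' trans anti _ _ _ (IH2 hkl) _; exact: h3.1.
split => //.
rewrite leq_eqVlt => /orP[/eqP ->|hkl]; first exact: refl.
exact: (hlt hkl).1.
Qed.

From mathcomp Require Import ring lra.
Local Open Scope ring_scope.

Definition dv (n k : nat) : rat := k%:R / 2 ^+ n.

Lemma dv_le n k m l : dv n k <= dv m l -> (k * 2 ^ m <= l * 2 ^ n)%N.
Proof.
rewrite /dv ler_pdivrMr ?exprn_gt0 // mulrAC ler_pdivlMr ?exprn_gt0 //.
by rewrite -!natrX -!natrM ler_nat.
Qed.

Lemma dv_lt n k m l : dv n k < dv m l -> (k * 2 ^ m < l * 2 ^ n)%N.
Proof.
rewrite /dv ltr_pdivrMr ?exprn_gt0 // mulrAC ltr_pdivlMr ?exprn_gt0 //.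
by rewrite -!natrX -!natrM ltr_nat.
Qed.

Lemma dv_full N : dv N (2 ^ N) = 1.
Proof. by rewrite /dv natrX divff // expf_neq0. Qed.

Lemma dv_S2 N k : dv N k.+2 = dv N k + 2 / 2 ^+ N.
Proof. by rewrite /dv -addn2 natrD mulrDl. Qed.

Lemma approx (a b : rat) : 0 < a -> a < b -> b < 1 ->
  exists N k, a < dv N k /\ dv N k.+1 <= b /\ (k.+1 <= 2 ^ N)%N.
Proof.
move=> a0 ab b1.
have d0 : 0 < b - a by rewrite subr_gt0.
set N := Num.Def.archi_bound (2 / (b - a)).
have hN : 2 / (b - a) < 2 ^+ N.
  apply: upper_nthrootP; exact: leqnn.
have h2 : 2 / 2 ^+ N < b - a.
  rewrite ltr_pdivrMr ?exprn_gt0 //.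
  by rewrite mulrC -ltr_pdivrMr.
clearbody N.
have exP : exists k, a < dv N k by exists (2 ^ N)%N; rewrite dv_full; exact: lt_trans ab b1.
case: (ex_minnP exP) => k hk hmin.
case: k hk hmin => [|k] hk hmin.
  by move: hk; rewrite /dv mul0r => /(lt_trans a0); rewrite ltxx.
have hk0 : dv N k <= a.
  by rewrite leNgt; apply/negP => /hmin; rewrite ltnn.
have hb : dv N k.+2 < b.
  rewrite dv_S2; move: (dv N k) (2 / 2 ^+ N) hk0 h2 => u v; lra.
exists N, k.+1; split => //; split; first exact: ltW.
rewrite -(dv_full N) in b1.
have := dv_lt (lt_trans hb b1).
by rewrite ltn_pmul2r ?expn_gt0 // => /ltnW.
Qed.

Definition tq (r : rat) : rat := (1 + r / (1 + `|r|)) / 2.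

Lemma tq_bounds r : 0 < tq r /\ tq r < 1.
Proof.
have hp : 0 < 1 + `|r| by rewrite ltr_pwDl.
have h1 : r / (1 + `|r|) < 1.
  rewrite ltr_pdivrMr // mul1r.
  apply: (le_lt_trans (ler_norm r)); lra.
have h2 : -1 < r / (1 + `|r|).
  rewrite ltr_pdivlMr // mulN1r.
  have : -r <= `|r| by rewrite -normrN ler_norm.
  lra.
rewrite /tq; split; lra.
Qed.

Lemma tq_mono p q : p < q -> tq p < tq q.
Proof.
move=> pq.
have hp : 0 < 1 + `|p| by rewrite ltr_pwDl.
have hq : 0 < 1 + `|q| by rewrite ltr_pwDl.
suff : p / (1 + `|p|) < q / (1 + `|q|) by rewrite /tq; lra.
rewrite ltr_pdivrMr // mulrAC ltr_pdivlMr //.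
case: (lerP 0 p) => hp0; case: (lerP 0 q) => hq0.
- rewrite !ger0_norm //; nra.
- lra.
- rewrite (ger0_norm hq0) (ltr0_norm hp0); nra.
- rewrite (ltr0_norm hq0) (ltr0_norm hp0); nra.
Qed.

Lemma le_lt_trans' T (le : T -> T -> Prop)
  (trans : forall a b c, le a b -> le b c -> le a c)
  (anti : forall a b, le a b -> le b a -> a = b) a b c :
  le a b -> Defs.lt le b c -> Defs.lt le a c.
Proof.
move=> hab [hbc nbc]; split; first exact: trans hab hbc.
move=> eac; subst c; exact: nbc (anti _ _ hbc hab).
Qed.

Lemma Hd_dv T (le : T -> T -> Prop)
  (refl : forall a, le a a) (trans : forall a b c, le a b -> le b c -> le a c)
  (anti : forall a b, le a b -> le b a -> a = b)
  (bb ee : T) (hbe : Defs.lt le bb ee)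
  (D : forall p q, le bb p -> le q ee -> Defs.lt le p q ->
        exists m, Defs.lt le p m /\ Defs.lt le m q) n k m l :
  (k <= 2 ^ n)%N -> (l <= 2 ^ m)%N ->
  (dv n k <= dv m l -> le (Hd le bb ee n k) (Hd le bb ee m l)) /\
  (dv n k < dv m l -> Defs.lt le (Hd le bb ee n k) (Hd le bb ee m l)).
Proof.
move=> hk hl.
rewrite -(Hd_lift le bb ee n m k) -(Hd_lift le bb ee m n l) (addnC m n).
have hl' : (l * 2 ^ n <= 2 ^ (n + m))%N.
  by rewrite addnC expnD leq_mul.
have [M1 M2] := Hd_mono refl trans anti hbe D (k * 2 ^ m) hl'.
split => h; [apply: M1; exact: dv_le | apply: M2; exact: dv_lt].
Qed.

Lemma Q_embed T (le : T -> T -> Prop)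
  (refl : forall a, le a a) (trans : forall a b c, le a b -> le b c -> le a c)
  (anti : forall a b, le a b -> le b a -> a = b) (cl : complete_lattice le)
  (bb ee : T) (hbe : Defs.lt le bb ee)
  (D : forall p q, le bb p -> le q ee -> Defs.lt le p q ->
        exists m, Defs.lt le p m /\ Defs.lt le m q) :
  ~ order_scattered le.
Proof.
rewrite /order_scattered => H; apply: H.
pose S r x := exists n k, (k <= 2 ^ n)%N /\ dv n k <= tq r /\ x = Hd le bb ee n k.
pose g r := epsilon (inhabits bb) (is_lub le (S r)).
have gl r : is_lub le (S r) (g r) := epsilon_spec _ _ (cl (S r)).
have key p q : p < q -> Defs.lt le (g p) (g q).
  move=> pq; have [tp0 tp1] := tq_bounds p; have [tq0 tq1] := tq_bounds q.
  have [N [k [h1 [h2 h3]]]] := approx tp0 (tq_mono pq) tq1.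
  have hA : le (g p) (Hd le bb ee N k).
    apply: (gl p).2 => x [n [k' [hk' [hd ->]]]].
    apply: (Hd_dv refl trans anti hbe D hk' (ltnW h3)).1.
    exact: ltW (le_lt_trans hd h1).
  have hB := (Hd_mono refl trans anti hbe D k h3).2 (ltnSn k).
  have hC : le (Hd le bb ee N k.+1) (g q).
    by apply: (gl q).1; exists N, k.+1.
  exact: le_lt_trans' trans anti _ _ _ hA (lt_le_trans' trans anti hB hC).
exists g => p q; split.
  rewrite le_eqVlt => /orP[/eqP->|pq]; first exact: refl.
  exact: (key _ _ pq).1.
move=> hle; rewrite leNgt; apply/negP => qp.
have [h hne] := key _ _ qp; apply: hne; exact: anti.
Qed.

From mathcomp Require classical_sets.

Definition pb (P : Prop) : bool := if excluded_middle_informative P then true else false.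
Lemma pbP (P : Prop) : pb P = true <-> P.
Proof. by rewrite /pb; case: excluded_middle_informative. Qed.

Lemma chain_max T (le : T -> T -> Prop) (Sx : T -> Prop) (b : T)
  (refl : forall a, le a a) (trans : forall a b c, le a b -> le b c -> le a c) (Sb : Sx b)
  (tot : forall x y, Sx x -> Sx y -> le x y \/ le y x) (l : list T) :
  (forall x, List.In x l -> Sx x) ->
  exists m, Sx m /\ forall x, List.In x l -> le x m.
Proof.
elim: l => [|x l IH] hl; first by exists b.
have [m [Sm hm]] : exists m, Sx m /\ forall y, List.In y l -> le y m.
  by apply: IH => y hy; apply: hl; right.
have Sxx : Sx x by apply: hl; left.
case: (tot x m Sxx Sm) => h.
- exists m; split => // y [<-|hy]; [exact: h | exact: hm].
- exists x; split => // y [<-|hy]; [exact: refl | exact: trans (hm _ hy) h].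
Qed.

Lemma weak_atomic T (le : T -> T -> Prop)
  (refl : forall a, le a a) (trans : forall a b c, le a b -> le b c -> le a c)
  (anti : forall a b, le a b -> le b a -> a = b) (alg : algebraic le) b e :
  le b e -> ~ le e b ->
  exists p q, [/\ le b p, le q e, Defs.lt le p q &
    forall z, le p z -> le z q -> z = p \/ z = q].
Proof.
move=> be neb; have [cl algx] := alg.
have [Se [Sc Sl]] := algx e.
have [c [Scc ncb]] : exists c, Se c /\ ~ le c b.
  apply: NNPP => hn; apply: neb; apply: Sl.2 => x Sx.
  by apply: NNPP => nx; apply: hn; exists x.
have ce : le c e := Sl.1 _ Scc.
have compc := Sc _ Scc.
pose P x := [/\ le b x, le x e & ~ le c x].
pose U := {x : T | P x}.
pose R := fun u v : U => pb (le (proj1_sig u) (proj1_sig v)).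
have pb0 : P b by split.
have [pm pmax] : exists t, classical_sets.premaximal R t.
  apply: (@classical_sets.ZL_preorder U (exist _ b pb0) R).
  - by move=> t; apply/pbP; apply: refl.
  - by move=> r s t /pbP h1 /pbP h2; apply/pbP; exact: trans h1 h2.
  move=> A totA.
  pose Sx x := x = b \/ exists u, A u /\ proj1_sig u = x.
  have SxP x : Sx x -> P x.
    by case=> [->|[[u pu] [_ /= <-]]].
  have tot x y : Sx x -> Sx y -> le x y \/ le y x.
    move=> hx hy; case: hx => [->|[u [Au <-]]].
      by left; case: (SxP _ hy).
    case: hy => [->|[v [Av <-]]].
      by right; case: (SxP _ (or_intror (ex_intro _ u (conj Au erefl)))) => [? _ _].
    by case: (totA _ _ Au Av) => /pbP h; [left|right].
  have [s0 hs0] := cl Sx.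
  have Ps0 : P s0.
    split.
    - by apply: hs0.1; left.
    - by apply: hs0.2 => x /SxP [].
    - move=> cs0.
      have [F [t [[l hl] [FS [Ft ct]]]]] := compc _ _ hs0 cs0.
      have [m [Sm hm]] := @chain_max T le Sx b refl trans (or_introl erefl) tot l
        (fun x hx => FS x ((hl x).2 hx)).
      have tm : le t m by apply: Ft.2 => x /hl /hm.
      by case: (SxP _ Sm) => _ _; apply; exact: trans ct tm.
  exists (exist _ s0 Ps0) => u Au; apply/pbP; apply: hs0.1; right; by exists u.
case: pm pmax => p Pp pmax.
have [q hq] := cl (fun x => x = p \/ x = c).
have [bp pe ncp] := Pp.
have pq : le p q by apply: hq.1; left.
have cq : le c q by apply: hq.1; right.
have qe : le q e by apply: hq.2 => x [->|->].
exists p, q; split => //.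
  split => // epq; apply: ncp; by rewrite epq.
move=> z pz zq.
case: (classic (le c z)) => hc.
  right; apply: anti => //; apply: hq.2 => x [->|->] //.
have Pz : P z by split; [exact: trans bp pz | exact: trans zq qe | ].
left; have := pmax (exist _ z Pz) (proj2 (pbP _) pz) => /pbP /= zp.
exact: anti.
Qed.

Lemma phi_ext X (phi : (X -> Prop) -> (X -> Prop)) (hcg : convex_geometry phi) A :
  sset A (phi A).
Proof. by case: hcg => _ [h _ _] _ _. Qed.

Lemma phi_mono X (phi : (X -> Prop) -> (X -> Prop)) (hcg : convex_geometry phi) A B :
  sset A B -> sset (phi A) (phi B).
Proof. by case: hcg => _ [_ h _] _ _; apply: h. Qed.

Lemma phi_closed X (phi : (X -> Prop) -> (X -> Prop)) (hcg : convex_geometry phi) A :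
  is_closed phi (phi A).
Proof. by case: hcg => _ [_ _ h] _ _; exact: h. Qed.

Lemma phi_least X (phi : (X -> Prop) -> (X -> Prop)) (hcg : convex_geometry phi) A C :
  sset A C -> is_closed phi C -> sset (phi A) C.
Proof.
move=> AC cC x hx; apply/(cC x).
exact: (phi_mono hcg AC).
Qed.

Definition good X (phi : (X -> Prop) -> (X -> Prop)) (y : X) : Prop :=
  ~ phi (fun z => phi (fun w => w = y) z /\ z <> y) y.

Lemma core X (phi : (X -> Prop) -> (X -> Prop)) (hcg : convex_geometry phi) P y :
  is_closed phi P -> ~ P y -> ~ good phi y ->
  exists M, [/\ is_closed phi M, sset P M, sset M (phi (fun z => P z \/ z = y)),
    (exists z, M z /\ ~ P z) & ~ M y].
Proof.
move=> cP nPy ngy.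
set N := phi (fun z => P z \/ z = y).
have [z [Nz [nPz zy]]] : exists z, N z /\ ~ P z /\ z <> y.
  apply: NNPP => hn; apply: nPy.
  have sub : sset (fun z => phi (fun w => w = y) z /\ z <> y) P.
    move=> w [hw wy]; apply: NNPP => nPw; apply: hn; exists w; split => //.
    apply: (phi_mono hcg _ hw) => v ->; by right.
  apply: (phi_least hcg sub cP); exact: NNPP.
exists (phi (fun w => P w \/ w = z)); split.
- exact: phi_closed.
- by move=> w hw; apply: phi_ext => //; left.
- apply: phi_least => //; last exact: phi_closed.
  move=> w [hw|->]; last exact: Nz.
  by apply: phi_ext => //; left.
- by exists z; split => //; apply: phi_ext => //; right.
- case: hcg => _ _ _ hax; exact: hax P z y cP zy Nz nPz.
Qed.

Unset Implicit Arguments.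
Local Close Scope ring_scope.

Theorem corollary3p2 (T : Type) (le : T -> T -> Prop) :
  convexity_lattice le ->
  (algebraic le \/ order_scattered le) ->
  spatial le.
Proof.
move=> [X [phi [f [hcg fcl fsurj finj fle]]]] H.
have refl a : le a a by apply/fle.
have trans a b c : le a b -> le b c -> le a c.
  by move=> /fle h1 /fle h2; apply/fle => x /h1 /h2.
have anti a b : le a b -> le b a -> a = b.
  by move=> /fle h1 /fle h2; apply: finj => x; split; [apply: h1|apply: h2].
have cl : complete_lattice le.
  move=> S.
  have [a0 ha0] := fsurj _ (phi_closed hcg (fun x => exists a, S a /\ f a x)).
  exists a0; split.
  - move=> x Sx; apply/fle => y hy; apply/(ha0 y); apply: phi_ext => //.
    by exists x.
  - move=> u hu; apply/fle => y /(ha0 y); apply: phi_least => //.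
    by move=> w [a [Sa faw]]; move: (hu a Sa) => /fle; apply.
have ltne p q : Defs.lt le p q -> exists y, f q y /\ ~ f p y.
  move=> [pq npq]; apply: NNPP => hn; apply: npq; apply: anti => //.
  apply/fle => y fqy; apply: NNPP => nfp; apply: hn; by exists y.
have cji y c : good phi y -> seq_set (f c) (phi (fun w => w = y)) ->
    completely_join_irreducible le c.
  move=> gy fc.
  pose Dy := fun z => phi (fun w => w = y) z /\ z <> y.
  have cD : is_closed phi Dy.
    move=> w; split; last exact: phi_ext.
    move=> hw; split.
    + apply/(phi_closed hcg (fun w => w = y) w).
      apply: (phi_mono hcg _ hw) => v []; done.
    + by move=> wy; subst w; exact: gy hw.
  have [ys hys] := fsurj _ cD.
  have yfc : f c y by apply/(fc y); apply: phi_ext.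
  have sub z : le z c -> ~ f z y -> le z ys.
    move=> /fle zc nzy; apply/fle => w hw; apply/(hys w); split.
    + by apply/(fc w); apply: zc.
    + by move=> wy; subst w.
  have zc z : le z c -> f z y -> z = c.
    move=> /fle hzc zy; apply: anti; first by apply/fle.
    apply/fle => w /(fc w); apply: phi_least => //; first by move=> v ->.
  exists ys; split; [split|split].
  - apply/fle => w /(hys w) [hw _]; exact/(fc w).
  - by move=> e; subst ys; have := (hys y).1 yfc => -[].
  - move=> z ysz zle; case: (classic (f z y)) => hz.
      by right; apply: zc.
    by left; apply: anti => //; apply: sub.
  - move=> z [zle znc]; apply: sub => // hz; exact: znc (zc _ zle hz).
split => // a.
exists (fun c => le c a /\ completely_join_irreducible le c); split.
  by move=> c [].
split; first by move=> c [].
move=> u hu.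
set B := phi (fun y => f a y /\ good phi y).
have Bu : sset B (f u).
  apply: phi_least => //.
  move=> y [fay gy].
  have [c hc] := fsurj _ (phi_closed hcg (fun w => w = y)).
  have ca : le c a.
    apply/fle => w /(hc w); apply: phi_least => //; first by move=> v ->.
  have := hu c (conj ca (cji y c gy hc)) => /fle; apply.
  by apply/(hc y); apply: phi_ext.
apply/fle => x fax; apply: Bu; apply: NNPP => nBx.
have bad y : f a y -> ~ B y -> ~ good phi y.
  by move=> fay nBy gy; apply: nBy; apply: phi_ext => //; split.
have [b hb] := fsurj _ (phi_closed hcg (fun y => f a y /\ good phi y)).
have ba : le b a.
  apply/fle => w /(hb w); apply: phi_least => //; by move=> v [].
have nab : ~ le a b by move=> /fle h; apply: nBx; apply/(hb x); apply: h.
case: H => [alg|scat].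
- have [p [q [bp qa pq cov]]] := weak_atomic refl trans anti alg ba nab.
  have [y0 [fqy nfpy]] := ltne _ _ pq.
  have fay0 : f a y0 by move: qa => /fle; apply.
  have nBy0 : ~ B y0 by move=> hB; apply: nfpy; move: bp => /fle; apply; apply/(hb y0).
  have [M [cM pM Mq [z [Mz nz]] nMy]] := core hcg (fcl p) nfpy (bad _ fay0 nBy0).
  have [m hm] := fsurj _ cM.
  have pm : le p m by apply/fle => w /pM /(hm w).
  have mq : le m q.
    apply/fle => w /(hm w) /Mq; apply: phi_least => //.
    by move=> v [|->] //; move: pq => [/fle h _]; apply: h.
  case: (cov m pm mq) => e; subst m.
  + by apply: nz; apply/(hm z).
  + by apply: nMy; apply/(hm y0).
- apply: (Q_embed refl trans anti cl (bb := b) (ee := a)) => //.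
    by split => // e; subst b; apply: nab.
  move=> p q bp qa pq.
  have [y0 [fqy nfpy]] := ltne _ _ pq.
  have fay0 : f a y0 by move: qa => /fle; apply.
  have nBy0 : ~ B y0 by move=> hB; apply: nfpy; move: bp => /fle; apply; apply/(hb y0).
  have [M [cM pM Mq [z [Mz nz]] nMy]] := core hcg (fcl p) nfpy (bad _ fay0 nBy0).
  have [m hm] := fsurj _ cM.
  exists m; split; split.
  + by apply/fle => w /pM /(hm w).
  + by move=> e; subst m; apply: nz; apply/(hm z).
  + apply/fle => w /(hm w) /Mq; apply: phi_least => //.
    by move=> v [|->] //; move: pq => [/fle h _]; apply: h.
  + by move=> e; subst m; apply: nMy; apply/(hm y0).
Qed.
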